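(* For every finite chain ring $R$ and every $k\ge1$, the linear simplex code $\mathcal{S}_k^\beta$ is optimal with respect to the Griesmer bound, i.e., its length $n$ satisfies $n=\sum_{i=0}^{k(\mathcal{S}_k^\beta)-1}\left\lceil\frac{d_H(\mathcal{S}_k^\beta)}{q^i}\right\rceil$.
   Context: Let $R$ be a finite commutative chain ring with maximal ideal $\langle\gamma\rangle$, nilpotency index $s$ and residue field $R/\langle\gamma\rangle\cong\mathbb{F}_q$. Fix coset representatives $T=\{e_0,\dots,e_{q-1}\}$ with $e_0=0,e_1=1$, ordered $e_0<\dots<e_{q-1}$; each $r\in R$ is uniquely $\sum_{i=0}^{s-1}r_i\gamma^i$, $r_i\in T$; order $R$ by $x>y$ iff $x_i>y_i$ in $T$ for the largest $i$ with $x_i\neq y_i$; list $R=\{\rho_0,\dots,\rho_{q^s-1}\}$ increasingly. $\mathbf{a}^{(m)}$ is the constant vector of length $m$. Define $G_1^\alpha=(\rho_0\ \cdots\ \rho_{q^s-1})$ and, for $k>1$, $G_k^\alpha$ as the matrix of $q^s$ column blocks, the $j$-th having first row $\boldsymbol{\rho_j}^{(q^{s(k-1)})}$ and $G_{k-1}^\alpha$ below. List $\langle\gamma\rangle$ increasingly as $a_0\gamma<\dots<a_{q^{s-1}-1}\gamma$. Define $G_1^\beta=(1)$ and, for $k>1$, $G_k^\beta$ as the matrix with column blocks: first a block with first row $\mathbf{1}^{(q^{s(k-1)})}$ and $G_{k-1}^\alpha$ below; then for each $j=0,\dots,q^{s-1}-1$ a block with first row the constant vector with entry $a_j\gamma$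 and $G_{k-1}^\beta$ below. $\mathcal{S}_k^\beta$ is the $R$-submodule generated by the rows of $G_k^\beta$. For a linear code $\mathcal{C}\subseteq R^n$, $d_H(\mathcal{C})$ is its minimum Hamming distance and $k(\mathcal{C})$ is the minimum rank of a free $R$-submodule $\mathcal{C}'\subseteq R^n$ with $\mathcal{C}\subseteq\mathcal{C}'$. The Griesmer bound states $n\ge\sum_{i=0}^{k(\mathcal{C})-1}\lceil d_H(\mathcal{C})/q^i\rceil$; a code is optimal with respect to it when equality holds. *)

(* Defs.v *)
From HB Require Import structures.
From mathcomp Require Import all_boot all_order all_algebra.
Set Implicit Arguments. Unset Strict Implicit. Unset Printing Implicit Defensive.
Import Order.TTheory GRing.Theory.
Local Open Scope ring_scope.

Section ChainRing.
Variable R : finComUnitRingType.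

Definition is_ideal (I : {set R}) : Prop :=
  [/\ 0 \in I, (forall x y, x \in I -> y \in I -> x + y \in I)
    & (forall r x, x \in I -> r * x \in I)].

Definition chain_ring : Prop :=
  forall I J : {set R}, is_ideal I -> is_ideal J -> I \subset J \/ J \subset I.

Definition gideal (g : R) : {set R} := [set g * y | y : R].

Definition maximal_ideal_gen (g : R) : Prop :=
  [/\ is_ideal (gideal g), 1 \notin gideal g &
      forall J : {set R}, is_ideal J -> gideal g \subset J ->
        J = gideal g \/ J = setT].

Definition nilp_index (g : R) (s : nat) : Prop :=
  g ^+ s = 0 /\ forall i, (i < s)%N -> g ^+ i != 0.

(* T is a complete set of coset representatives of R / <g> (listed in order
   e_0 < e_1 < ... < e_{q-1}); q = size T *)
Definition coset_reps (g : R) (T : seq R) : Prop :=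
  forall r : R, count (fun e => r - e \in gideal g) T = 1%N.

(* r = sum_{i<s} e_{f i} g^i ; rank r = sum_i f(i) q^i, so that ordering by
   rank is the order of the paper (compare the digit at the largest index
   where they differ). *)
Definition Rrank (g : R) (s : nat) (T : seq R) (r : R) : nat :=
  match [pick f : {ffun 'I_s -> 'I_(size T)} |
           r == \sum_(i < s) T`_(f i) * g ^+ i] with
  | Some f => (\sum_(i < s) (f i : nat) * (size T) ^ i)%N
  | None => 0%N
  end.

(* rho_0 < rho_1 < ... < rho_{q^s - 1} : the elements of R listed increasingly *)
Definition elts_sorted (g : R) (s : nat) (T : seq R) : seq R :=
  sort (fun x y => Rrank g s T x <= Rrank g s T y)%N (enum R).

(* a_0 g < ... < a_{q^{s-1}-1} g : the elements of <g> listed increasingly *)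
Definition ideal_sorted (g : R) (s : nat) (T : seq R) : seq R :=
  [seq x <- elts_sorted g s T | x \in gideal g].

(* columns of G_k^alpha (each column is a list of length k) *)
Fixpoint colsA (rho : seq R) (k : nat) : seq (seq R) :=
  match k with
  | 0 => [:: [::]]
  | k'.+1 => flatten [seq [seq x :: c | c <- colsA rho k'] | x <- rho]
  end.

(* columns of G_k^beta, k >= 1 *)
Fixpoint colsB (rho I : seq R) (k : nat) : seq (seq R) :=
  match k with
  | 0 => [::]
  | k'.+1 =>
    match k' with
    | 0 => [:: [:: 1]]
    | _.+1 => [seq 1 :: c | c <- colsA rho k'] ++
              flatten [seq [seq a :: c | c <- colsB rho I k'] | a <- I]
    end
  end.

Definition mx_of_cols (k : nat) (cols : seq (seq R)) : 'M[R]_(k, size cols) :=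
  \matrix_(i < k, j < size cols) (nth [::] cols j)`_i.

Definition colsBeta (g : R) (s : nat) (T : seq R) (k : nat) : seq (seq R) :=
  colsB (elts_sorted g s T) (ideal_sorted g s T) k.

Definition G_beta (g : R) (s : nat) (T : seq R) (k : nat) :
  'M[R]_(k, size (colsBeta g s T k)) := mx_of_cols k (colsBeta g s T k).

Definition S_beta (g : R) (s : nat) (T : seq R) (k : nat) :
  {set 'rV[R]_(size (colsBeta g s T k))} :=
  [set m *m G_beta g s T k | m : 'rV[R]_k].

Definition hamming (n : nat) (x y : 'rV[R]_n) : nat := #|[set i | x 0 i != y 0 i]|.

Definition dH (n : nat) (C : {set 'rV[R]_n}) : nat :=
  \big[minn/n]_(x in C) \big[minn/n]_(y in C | y != x) hamming x y.

(* k(C): minimum rank r of a free submodule (image of an injective R-linear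
   map R^r -> R^n, m |-> m *m B) containing C *)
Definition free_rank (n : nat) (C : {set 'rV[R]_n}) : nat :=
  \big[minn/n]_(r < n.+1 | [exists B : 'M[R]_(r, n),
       [forall m : 'rV[R]_r, (m *m B == 0) ==> (m == 0)] &&
       [forall c in C, exists m : 'rV[R]_r, c == m *m B]]) (r : nat).

End ChainRing.

Definition ceil_div (d m : nat) : nat := ((d + m.-1) %/ m)%N.

(* Main.v *)
Require Import Defs.
From HB Require Import structures.
From mathcomp Require Import all_boot all_order all_algebra.
Import GRing.Theory.
Local Open Scope ring_scope.
Set Implicit Arguments. Unset Strict Implicit.

Lemma gidealP (R : finComUnitRingType) (a x : R) :
  reflect (exists y, x = a * y) (x \in gideal a).
Proof.
apply: (iffP imsetP) => [[y _ ->]|[y ->]]; first by exists y.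
by exists y.
Qed.

Lemma ideal_gideal (R : finComUnitRingType) (a : R) : is_ideal (gideal a).
Proof.
split.
- by apply/gidealP; exists 0; rewrite mulr0.
- move=> x y /gidealP[x1 ->] /gidealP[y1 ->]; apply/gidealP; exists (x1 + y1).
  by rewrite mulrDr.
- move=> r x /gidealP[x1 ->]; apply/gidealP; exists (r * x1).
  by rewrite mulrCA.
Qed.

Lemma mem_gideal_self (R : finComUnitRingType) (a : R) : a \in gideal a.
Proof. by apply/gidealP; exists 1; rewrite mulr1. Qed.

Lemma unit_notin (R : finComUnitRingType) (g x : R) :
  chain_ring R -> maximal_ideal_gen g -> x \notin gideal g ->
  x \is a GRing.unit.
Proof.
move=> hc [hI h1 hmax] hx.
case: (hc _ _ (ideal_gideal x) (ideal_gideal g)) => sub.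
  by move: hx; rewrite (subsetP sub _ (mem_gideal_self x)).
case: (hmax _ (ideal_gideal x) sub) => eq.
  by move: hx; rewrite -eq mem_gideal_self.
have : (1 : R) \in gideal x by rewrite eq inE.
by case/gidealP => y hy; apply/unitrPr; exists y.
Qed.

Lemma ann_mul0 (R : finComUnitRingType) (g a x : R) :
  chain_ring R -> maximal_ideal_gen g -> g * a = 0 -> a != 0 ->
  (a * x == 0) = (x \in gideal g).
Proof.
move=> hc hm hga ha.
case: (boolP (x \in gideal g)) => hx.
  by case/gidealP: hx => y ->; rewrite mulrA (mulrC a) hga mul0r eqxx.
apply/negbTE; apply: contra ha => /eqP hax.
have hu := unit_notin hc hm hx.
by rewrite -(mulrK hu a) hax mul0r.
Qed.

Lemma ann_div (R : finComUnitRingType) (g a y : R) :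
  chain_ring R -> maximal_ideal_gen g -> g * a = 0 -> a != 0 -> g * y = 0 ->
  exists x, a * x = y.
Proof.
move=> hc hm hga ha hgy.
case: (hc _ _ (ideal_gideal y) (ideal_gideal a)) => sub.
  by case/gidealP: (subsetP sub _ (mem_gideal_self y)) => x ->; exists x.
case/gidealP: (subsetP sub _ (mem_gideal_self a)) => z hz.
case: (boolP (z \in gideal g)) => hzg.
  case/gidealP: hzg => w hw; move: ha; rewrite hz hw mulrA (mulrC y) hgy.
  by rewrite mul0r eqxx.
have hu := unit_notin hc hm hzg.
by exists z^-1; rewrite hz mulrK.
Qed.

Lemma sum_mem (R : finType) (A : {set R}) :
  (\sum_(x : R) (x \in A))%N = #|A|.
Proof.
rewrite -sum1_card [RHS]big_mkcond /=; apply: eq_bigr => x _.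
by case: (x \in A).
Qed.

Lemma card_level (R : finComUnitRingType) (g a y : R) :
  chain_ring R -> maximal_ideal_gen g -> g * a = 0 -> a != 0 -> g * y = 0 ->
  (\sum_(x : R) (a * x == y)%R)%N = #|gideal g|.
Proof.
move=> hc hm hga ha hgy.
have [x0 hx0] := ann_div hc hm hga ha hgy.
rewrite (reindex_inj (addIr x0)) /= -sum_mem; apply: eq_bigr => x _.

rewrite mulrDr hx0 -(ann_mul0 _ hc hm hga ha). by rewrite -subr_eq0 addrK.
Qed.

Lemma card_R (R : finComUnitRingType) (g : R) (T : seq R) :
  coset_reps g T -> #|R| = (size T * #|gideal g|)%N.
Proof.
move=> hT.
transitivity (\sum_(r : R) \sum_(e <- T) (r - e \in gideal g)%R)%N.
  rewrite -sum1_card; apply: eq_bigr => r _.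
  rewrite -(hT r) -sum1_count big_mkcond /=; apply: eq_bigr => e _.
  by case: (_ \in _).
rewrite (exchange_big_dep predT) //=.
rewrite -sum1_size big_distrl /=.
apply: eq_bigr => e _; rewrite mul1n -sum_mem.
rewrite (reindex_inj (addIr e)) /=; apply: eq_bigr => x _; by rewrite addrK.
Qed.

Lemma count_enum (T : finType) (P : pred T) : count P (enum T) = #|P|.
Proof. by rewrite -sum1_count big_enum_cond /= sum1_card. Qed.

Lemma sum_perm (T : finType) (rho : seq T) (F : T -> nat) :
  perm_eq rho (enum T) -> (\sum_(x <- rho) F x)%N = (\sum_x F x)%N.
Proof. by move=> h; rewrite (perm_big _ h) big_enum. Qed.

Lemma count_const (T : Type) (b : bool) (s : seq T) :
  count (fun _ => b) s = (b * size s)%N.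
Proof. by case: b; rewrite ?mul1n ?mul0n ?count_predT ?count_pred0. Qed.

Definition dot (R : ringType) (ms c : seq R) : R :=
  \sum_(i < size ms) ms`_i * c`_i.

Lemma dot_cons (R : ringType) (a : R) ms x c :
  dot (a :: ms) (x :: c) = a * x + dot ms c.
Proof. by rewrite /dot /= big_ord_recl. Qed.

Lemma dot0 (R : ringType) (ms c : seq R) :
  ~~ has (fun a => a != 0) ms -> dot ms c = 0.
Proof.
move=> h; apply: big1 => i _.
have : ms`_i \in ms by apply: mem_nth.
move=> hi; move/hasPn: h => /(_ _ hi); rewrite negbK => /eqP ->.
by rewrite mul0r.
Qed.

Lemma count_colsA_S (R : finComUnitRingType) (rho : seq R) (P : pred (seq R)) k :
  count P (colsA rho k.+1) =
  (\sum_(x <- rho) count (fun c => P (x :: c)) (colsA rho k))%N.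
Proof.
rewrite /= count_flatten -map_comp sumnE big_map; apply: eq_bigr => x _.
by rewrite /= count_map.
Qed.

Lemma size_colsA (R : finComUnitRingType) (rho : seq R) k :
  perm_eq rho (enum R) -> size (colsA rho k) = (#|R| ^ k)%N.
Proof.
move=> h; elim: k => [//|k IH].
rewrite -count_predT count_colsA_S sum_perm //.
under eq_bigr do rewrite count_predT IH.
by rewrite sum_nat_const cardT -cardE expnS.
Qed.

Lemma addr_eq_sub (R : zmodType) (u v w : R) : (u + v == w) = (v == w - u).
Proof.
apply/eqP/eqP => h; first by rewrite -h (addrC u v) addrK.
by rewrite h addrC subrK.
Qed.

Lemma levelA (R : finComUnitRingType) (g : R) rho (ms : seq R) (y : R) :
  chain_ring R -> maximal_ideal_gen g -> perm_eq rho (enum R) ->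
  all (fun a => g * a == 0) ms -> g * y = 0 -> has (fun a => a != 0) ms ->
  count (fun c => dot ms c == y) (colsA rho (size ms)) =
  (#|R| ^ (size ms).-1 * #|gideal g|)%N.
Proof.
move=> hc hm hrho.
elim: ms y => [|a ms IH] y //= /andP[/eqP hga hall] hgy hhas.
rewrite count_colsA_S sum_perm //.
transitivity (\sum_(x : R) count (fun c => (dot ms c == y - a * x)%R)
                (colsA rho (size ms)))%N.
  by apply: eq_bigr => x _; apply: eq_count => c /=; rewrite dot_cons addr_eq_sub.
case: (boolP (has (fun a => a != 0) ms)) => hms.
  transitivity (\sum_(x : R) (#|R| ^ (size ms).-1 * #|gideal g|))%N.
    apply: eq_bigr => x _; apply: IH => //.
    by rewrite mulrBr hgy mulrA hga mul0r subrr.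
  rewrite sum_nat_const cardT -cardE mulnA -expnS prednK //.
  by case: (ms) hms.
have ha : a != 0 by move: hhas => /orP[//|]; rewrite (negbTE hms).
transitivity (\sum_(x : R) count (fun c => (0 == y - a * x)%R)
                (colsA rho (size ms)))%N.
  by apply: eq_bigr => x _; apply: eq_count => c /=; rewrite dot0.
under eq_bigr => x _ do rewrite count_const.
rewrite size_colsA // -big_distrl /= mulnC; congr (_ * _)%N.
rewrite -(card_level hc hm hga ha hgy); apply: eq_bigr => x _.
by rewrite eq_sym subr_eq0 eq_sym.
Qed.

Lemma sum_const_seq (T : Type) (s : seq T) (n : nat) :
  (\sum_(x <- s) n)%N = (size s * n)%N.
Proof. by rewrite big_const_seq count_predT iter_addn_0 mulnC. Qed.

Lemma count_C (T : Type) (P : pred T) s :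
  count (predC P) s = (size s - count P s)%N.
Proof. by rewrite -(count_predC P s) addKn. Qed.

Lemma levelB (R : finComUnitRingType) (g : R) rho (ms : seq R) :
  chain_ring R -> maximal_ideal_gen g -> perm_eq rho (enum R) ->
  all (fun a => g * a == 0) ms -> has (fun a => a != 0) ms ->
  count (fun c => dot ms c != 0)
    (colsB rho [seq x <- rho | x \in gideal g] (size ms)) =
  (#|R| ^ (size ms).-1)%N.
Proof.
move=> hc hm hrho.
set I := [seq x <- rho | x \in gideal g].
have sizeI : size I = #|gideal g|.
  by rewrite size_filter (permP hrho) count_enum.
elim: ms => [|a ms IH] // /andP[/eqP hga hall] hhas.
have {}hall : all (fun a => g * a == 0) ms := hall.
case hs: (size ms) => [|k].
  move/eqP: hs; rewrite size_eq0 => /eqP hs; subst ms.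
  rewrite /= dot_cons mulr1 /dot big_ord0 addr0.
  by move: hhas => /= /orP[->|].
have -> : colsB rho I (size (a :: ms)) =
   [seq 1 :: c | c <- colsA rho (size ms)] ++
   flatten [seq [seq x :: c | c <- colsB rho I (size ms)] | x <- I]
  by rewrite /= hs.
have -> : (size (a :: ms)).-1 = size ms by [].
rewrite count_cat count_map count_flatten -map_comp sumnE big_map.
have e1 : count (preim (cons 1) (fun c => dot (a :: ms) c != 0))
            (colsA rho (size ms)) =
          count (predC (fun c => dot ms c == - a)) (colsA rho (size ms)).
  apply: eq_count => c /=; by rewrite dot_cons mulr1 addr_eq_sub sub0r.
have e2 : (\sum_(x <- I) (count (fun c => (dot (a :: ms) c != 0)%R) \o
              (map (cons x))) (colsB rho I (size ms)))%N =
          (\sum_(x <- I) count (fun c => (dot ms c != 0)%R)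
              (colsB rho I (size ms)))%N.
  rewrite big_seq [RHS]big_seq; apply: eq_bigr => x hx /=.
  rewrite count_map; apply: eq_count => c /=.
  rewrite dot_cons; move: hx; rewrite mem_filter => /andP[/gidealP[y ->] _].
  by rewrite mulrCA mulrA hga mul0r add0r.
rewrite e1 e2 sum_const_seq sizeI count_C size_colsA //.
case: (boolP (has (fun a => a != 0) ms)) => hms.
  have hga' : g * - a = 0 by rewrite mulrN hga oppr0.
  have hX := levelA (y := -a) hc hm hrho hall hga' hms.
  rewrite IH // hX mulnC subnK //.
  by rewrite mulnC -hX -(size_colsA (size ms) hrho) count_size.
have ha : a != 0 by move: hhas => /orP[//| h]; case/negP: hms.
rewrite (eq_count (a2 := pred0)); last first.
  by move=> c /=; rewrite dot0 // eq_sym oppr_eq0 (negbTE ha).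
rewrite [count _ (colsB _ _ _)](eq_count (a2 := pred0)); last first.
  by move=> c /=; rewrite dot0 // eqxx.
by rewrite !count_pred0 subn0 muln0 addn0.
Qed.

Lemma card_nth (X : Type) (x0 : X) (s : seq X) (P : pred X) :
  #|[set j : 'I_(size s) | P (nth x0 s j)]| = count P s.
Proof.
rewrite -[in RHS](mkseq_nth x0 s) /mkseq -val_enum_ord -map_comp count_map.
by rewrite count_enum cardsE.
Qed.

Definition mseq (R : ringType) k (m : 'rV[R]_k) : seq R :=
  [seq m 0 i | i <- enum 'I_k].

Lemma size_mseq (R : ringType) k (m : 'rV[R]_k) : size (mseq m) = k.
Proof. by rewrite size_map size_enum_ord. Qed.

Lemma nth_mseq (R : ringType) k (m : 'rV[R]_k) (i : 'I_k) : (mseq m)`_i = m 0 i.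
Proof. by rewrite (nth_map i) ?size_enum_ord // nth_ord_enum. Qed.

Lemma mul_cols_entry (R : finComUnitRingType) k (cols : seq (seq R))
  (m : 'rV[R]_k) j :
  (m *m mx_of_cols k cols) 0 j = dot (mseq m) (nth [::] cols j).
Proof.
rewrite !mxE /dot size_mseq; apply: eq_bigr => i _.
by rewrite nth_mseq mxE.
Qed.

Definition wt (R : ringType) n (w : 'rV[R]_n) := #|[set i | w 0 i != 0]|.

Lemma wt_cols (R : finComUnitRingType) k (cols : seq (seq R)) (m : 'rV[R]_k) :
  wt (m *m mx_of_cols k cols) = count (fun c => dot (mseq m) c != 0) cols.
Proof.
rewrite /wt -(card_nth [::]); apply: eq_card => j; rewrite !inE.
by rewrite mul_cols_entry.
Qed.

Lemma mseq_socle (R : ringType) (g : R) k (m : 'rV[R]_k) :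
  (forall i, g * m 0 i = 0) -> all (fun a => g * a == 0) (mseq m).
Proof. by move=> h; apply/allP => x /mapP[i _ ->]; rewrite h. Qed.

Lemma mseq_has (R : ringType) k (m : 'rV[R]_k) :
  m != 0 -> has (fun a => a != 0) (mseq m).
Proof.
apply: contraR => /hasPn h; apply/eqP/rowP => i; rewrite mxE.
have := h (m 0 i) (map_f _ (mem_enum _ i)).
by rewrite negbK => /eqP.
Qed.

Lemma find_switch (f : nat -> bool) s :
  f 0%N -> ~~ f s -> exists c, f c /\ ~~ f c.+1.
Proof.
elim: s => [|s IH] h0 hs; first by rewrite h0 in hs.
case: (boolP (f s)) => h; first by exists s.
exact: IH.
Qed.

Lemma socle_red (R : ringType) (g : R) s k (m : 'rV[R]_k) :
  g ^+ s = 0 -> m != 0 ->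
  exists c, g ^+ c *: m != 0 /\ forall i, g * (g ^+ c *: m) 0 i = 0.
Proof.
move=> hs hm.
have h0 : (fun c => g ^+ c *: m != 0) 0%N by rewrite /= expr0 scale1r.
have h1 : ~~ (fun c => g ^+ c *: m != 0) s by rewrite /= hs scale0r eqxx.
have [c [h1' h2]] := find_switch (f := fun c => g ^+ c *: m != 0) h0 h1.
exists c; split => // i.
move: h2; rewrite negbK => /eqP /rowP /(_ i); rewrite !mxE => <-.
by rewrite exprS mulrA.
Qed.

Lemma wt_scale (R : ringType) n (a : R) (w : 'rV[R]_n) : (wt (a *: w) <= wt w)%N.
Proof.
apply: subset_leq_card; apply/subsetP => i; rewrite !inE mxE.
by apply: contra => /eqP ->; rewrite mulr0.
Qed.

Lemma wt_gt0 (R : ringType) n (w : 'rV[R]_n) : (0 < wt w)%N -> w != 0.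
Proof.
apply: contraTneq => ->; rewrite /wt.
have -> : [set i | (0 : 'rV[R]_n) 0 i != 0] = set0.
  by apply/setP => i; rewrite !inE mxE eqxx.
by rewrite cards0.
Qed.

Lemma wt0 (R : ringType) n : wt (0 : 'rV[R]_n) = 0%N.
Proof.
rewrite /wt (_ : [set i | (0 : 'rV[R]_n) 0 i != 0] = set0) ?cards0 //.
by apply/setP => i; rewrite !inE mxE eqxx.
Qed.

Lemma bigmin_ge (I : finType) (P : pred I) (F : I -> nat) n d :
  (d <= n)%N -> (forall i, P i -> d <= F i)%N ->
  (d <= \big[minn/n]_(i | P i) F i)%N.
Proof.
move=> hn hF; apply: (big_ind (fun x => d <= x)%N) => //.
by move=> x y hx hy; rewrite leq_min hx hy.
Qed.

Lemma bigmin_le_seq (I : eqType) (r : seq I) (P : pred I) (F : I -> nat) n i0 :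
  i0 \in r -> P i0 -> (\big[minn/n]_(i <- r | P i) F i <= F i0)%N.
Proof.
elim: r => [//|x r IH]; rewrite inE big_cons => /orP[/eqP <-|hr] hP.
  by rewrite hP geq_minl.
case: (P x); last exact: IH.
exact: leq_trans (geq_minr _ _) (IH hr hP).
Qed.

Lemma bigmin_le (I : finType) (P : pred I) (F : I -> nat) n i0 :
  P i0 -> (\big[minn/n]_(i | P i) F i <= F i0)%N.
Proof. by move=> hP; apply: bigmin_le_seq => //; rewrite mem_index_enum. Qed.

Lemma size_colsB (R : finComUnitRingType) (rho I : seq R) (q Mn : nat) k :
  perm_eq rho (enum R) -> #|R| = (q * Mn)%N -> size I = Mn ->
  size (colsB rho I k.+1) = (\sum_(i < k.+1) q ^ (k - i) * Mn ^ k)%N.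
Proof.
move=> hrho hN hI; elim: k => [|k IH]; first by rewrite big_ord1.
have -> : colsB rho I k.+2 = [seq 1 :: c | c <- colsA rho k.+1] ++
   flatten [seq [seq x :: c | c <- colsB rho I k.+1] | x <- I] by [].
rewrite size_cat size_map size_colsA // size_flatten /shape.
rewrite -map_comp sumnE big_map.
under eq_bigr do rewrite /= size_map IH.
rewrite sum_const_seq hI [RHS]big_ord_recl big_distrr /= hN expnMn subn0.
congr (_ + _)%N; apply: eq_bigr => i _.
by rewrite subSS mulnCA -expnS.
Qed.

Lemma ceil_pow (q Mn k i : nat) : (0 < q)%N -> (i <= k)%N ->
  ceil_div ((q * Mn) ^ k) (q ^ i) = (q ^ (k - i) * Mn ^ k)%N.
Proof.
move=> hq hi; rewrite /ceil_div expnMn -(subnKC hi) expnD.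
have hqi : (0 < q ^ i)%N by rewrite expn_gt0 hq.
rewrite -mulnA mulnC divnMDl // divn_small ?addn0; last by rewrite prednK.
by rewrite addKn.
Qed.

Lemma perm_elts (R : finComUnitRingType) (g : R) s T :
  perm_eq (elts_sorted g s T) (enum R).
Proof. by rewrite /elts_sorted perm_sort. Qed.

Lemma wt_socle (R : finComUnitRingType) (g : R) s T k (m : 'rV[R]_k) :
  chain_ring R -> maximal_ideal_gen g ->
  m != 0 -> (forall i, g * m 0 i = 0) ->
  wt (m *m G_beta g s T k) = (#|R| ^ k.-1)%N.
Proof.
move=> hc hm hne hsoc.
rewrite /G_beta wt_cols /colsBeta /ideal_sorted.
have := levelB hc hm (perm_elts g s T) (mseq_socle hsoc) (mseq_has hne).
by rewrite size_mseq.
Qed.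

Lemma wt_lower (R : finComUnitRingType) (g : R) s T k (m : 'rV[R]_k) :
  chain_ring R -> maximal_ideal_gen g -> g ^+ s = 0 ->
  m != 0 -> (#|R| ^ k.-1 <= wt (m *m G_beta g s T k))%N.
Proof.
move=> hc hm hs hne.
have [c [h1 h2]] := socle_red hs hne.
rewrite -(wt_socle s T hc hm h1 h2) -scalemxAl.
exact: wt_scale.
Qed.

Lemma hamming_wt (R : finComUnitRingType) n (x y : 'rV[R]_n) :
  hamming x y = wt (x - y).
Proof.
by apply: eq_card => i; rewrite !inE !mxE subr_eq0.
Qed.

Theorem proposition3p29 (R : finComUnitRingType) (g : R) (s : nat) (T : seq R)
    (k : nat) :
  chain_ring R -> maximal_ideal_gen g -> nilp_index g s ->
  coset_reps g T -> T`_0 = 0 -> T`_1 = 1 -> (1 <= k)%N ->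
  size (colsBeta g s T k) =
    (\sum_(i < free_rank (S_beta g s T k))
        ceil_div (dH (S_beta g s T k)) (size T ^ i))%N.
Proof.
move=> hc hm [hs _] hT _ _ hk.
set G := G_beta g s T k.
set n := size (colsBeta g s T k).
set C := S_beta g s T k.
have hN := card_R hT.
have hN0 : (0 < #|R|)%N by apply/card_gt0P; exists 0.
have hN1 : (1 < #|R|)%N.
  by apply/card_gt1P; exists 0, 1; split => //; rewrite eq_sym oner_neq0.
have hq : (0 < size T)%N by move: hN0; rewrite hN muln_gt0 => /andP[].
have hd : forall m : 'rV[R]_k, m != 0 -> (#|R| ^ k.-1 <= wt (m *m G))%N.
  by move=> m hne; apply: wt_lower.
have [m0 [hm0 hm0s]] : exists m0 : 'rV[R]_k,
    m0 != 0 /\ forall i, g * m0 0 i = 0.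
  have hne : (const_mx 1 : 'rV[R]_k) != 0.
    apply/eqP => /rowP /(_ (Ordinal hk)); rewrite !mxE; apply/eqP.
    exact: oner_neq0.
  have [c [h1 h2]] := socle_red hs hne.
  by exists (g ^+ c *: const_mx 1).
have hwt0 : wt (m0 *m G) = (#|R| ^ k.-1)%N by apply: wt_socle.
have hker : forall m : 'rV[R]_k, m *m G = 0 -> m = 0.
  move=> m h; apply/eqP; apply/negPn/negP => hne.
  by move: (hd m hne); rewrite h wt0 leqn0 expn_eq0 eqn0Ngt hN0.
have hdn : (#|R| ^ k.-1 <= n)%N.
  by rewrite -hwt0 /wt; apply: leq_trans (max_card _) _; rewrite card_ord.
have hkn : (k <= n)%N.
  apply: leq_trans hdn; case: (k) hk => [//|k'] _ /=.
  exact: ltn_expl.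
have hdH : dH C = (#|R| ^ k.-1)%N.
  apply/eqP; rewrite eqn_leq; apply/andP; split.
    have h0C : (0 : 'rV[R]_n) \in C.
      by apply/imsetP; exists 0 => //; rewrite mul0mx.
    apply: leq_trans (bigmin_le _ _ h0C) _.
    have hyC : ((- m0) *m G \in C) && ((- m0) *m G != 0).
      apply/andP; split; first by apply/imsetP; exists (- m0).
      by apply/eqP => /hker /eqP; rewrite oppr_eq0; apply/negP.
    apply: leq_trans (bigmin_le (P := fun y => (y \in C) && (y != 0)) _ _ hyC) _.
    by rewrite hamming_wt sub0r mulNmx opprK hwt0.
  apply: bigmin_ge => // x /imsetP[mx _ ->].
  apply: bigmin_ge => // y /andP[/imsetP[my _ ->] hne].
  rewrite hamming_wt -mulmxBl; apply: hd.
  apply: contra hne; rewrite subr_eq0 => /eqP ->; exact: eqxx.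
have hfr : free_rank C = k.
  apply/eqP; rewrite eqn_leq; apply/andP; split.
    have hkn' : (k < n.+1)%N by [].
    rewrite /free_rank; apply: leq_trans (bigmin_le _ _ (i0 := Ordinal hkn') _) _ => //.
    apply/existsP; exists G; apply/andP; split.
      by apply/forallP => m; apply/implyP => /eqP /hker ->.
    by apply/forall_inP => c /imsetP[m _ ->]; apply/existsP; exists m.
  rewrite /free_rank; apply: bigmin_ge => // r /existsP[B /andP[_ /forall_inP hcov]].
  have hC : #|C| = (#|R| ^ k)%N.
    rewrite /C /S_beta card_imset; first by rewrite card_mx mul1n.
    move=> m1 m2 h; apply/eqP; rewrite -subr_eq0; apply/eqP/hker.
    by rewrite mulmxBl h subrr.
  have hsub : C \subset [set m *m B | m : 'rV[R]_r].
    apply/subsetP => c hcC; have /existsP[m /eqP ->] := hcov c hcC.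
    by apply/imsetP; exists m.
  have := leq_trans (subset_leq_card hsub) (leq_imset_card _ _).
  by rewrite card_mx mul1n hC leq_exp2l.
have hsI : size (ideal_sorted g s T) = #|gideal g|.
  by rewrite /ideal_sorted size_filter (permP (perm_elts g s T)) count_enum.
have := size_colsB k.-1 (perm_elts g s T) hN hsI.
rewrite prednK // => hsz.
rewrite hfr hdH /n /colsBeta hsz; apply: eq_bigr => i _.
rewrite hN ceil_pow //.
by rewrite -ltnS prednK.
Qed.
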